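(* Let $F$ be a positive integer and $S$ a numerical semigroup. The following are equivalent: (1) $S\in\mathrm{Sat}(F)$ and $\mathrm{Sat}(F)\text{-}\mathrm{rank}(S)=1$; (2) there is $m\in\mathbb{N}$ with $2\le m<F$, $m\nmid F$, and $S=\mathrm{T}(m,F+1)$.
   Context: A numerical semigroup is a subset $S\subseteq\mathbb{N}$ closed under addition, containing $0$, with $\mathbb{N}\setminus S$ finite; its Frobenius number $\mathrm{F}(S)$ is the largest integer not in $S$. For $A\subseteq\mathbb{N}$ and $a\in A$, let $\mathrm{d}_A(a)=\gcd\{x\in A\mid x\le a\}$. A numerical semigroup $S$ is saturated if $s+\mathrm{d}_S(s)\in S$ for all $s\in S\setminus\{0\}$. For a positive integer $F$, $\mathrm{Sat}(F)$ denotes the set of all saturated numerical semigroups $S$ with $\mathrm{F}(S)=F$. For $a,b\in\mathbb{N}$, $\mathrm{T}(a,b)=\{ka\mid k\in\mathbb{N}\}\cup\{x\in\mathbb{N}\mid x\ge b\}$. Let $\Delta(F+1)=\{0\}\cup\{x\in\mathbb{N}\mid x\ge F+1\}$. A set $X\subseteq\mathbb{N}$ is a $\mathrm{Sat}(F)$-set if $X\cap\Delta(F+1)=\emptyset$ and there exists $S\in\mathrm{Sat}(F)$ with $X\subseteq S$. For a $\mathrm{Sat}(F)$-set $X$, $\mathrm{Sat}(F)[X]$ denotes the intersection of all elements of $\mathrm{Sat}(F)$ containing $X$ (the smallest element of $\mathrm{Sat}(F)$ containing $X$). If $S=\mathrm{Sat}(F)[X]$, $X$ is a $\mathrm{Sat}(F)$-system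 of generators of $S$; it is minimal if $S\neq\mathrm{Sat}(F)[Y]$ for every proper subset $Y\subsetneq X$. Every $S\in\mathrm{Sat}(F)$ has a unique minimal $\mathrm{Sat}(F)$-system of generators, and its cardinality is the $\mathrm{Sat}(F)$-rank of $S$, denoted $\mathrm{Sat}(F)\text{-}\mathrm{rank}(S)$. *)

(* Defs.v *)
From mathcomp Require Import all_boot.
Set Implicit Arguments. Unset Strict Implicit. Unset Printing Implicit Defensive.

Definition numerical_semigroup (S : pred nat) : Prop :=
  [/\ S 0, (forall x y, S x -> S y -> S (x + y))
    & exists N, forall x, N <= x -> S x].

Definition frobenius_is (S : pred nat) (F : nat) : Prop :=
  ~~ S F /\ (forall x, F < x -> S x).

Definition dA (A : pred nat) (a : nat) : nat :=
  \big[gcdn/0]_(0 <= x < a.+1 | A x) x.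

Definition saturated (S : pred nat) : Prop :=
  forall s, S s -> s != 0 -> S (s + dA S s).

Definition Sat (F : nat) (S : pred nat) : Prop :=
  [/\ numerical_semigroup S, saturated S & frobenius_is S F].

Definition Tset (a b : nat) : pred nat := fun x => (a %| x) || (b <= x).

Definition Delta (n : nat) : pred nat := fun x => (x == 0) || (n <= x).

(* Sat(F)-sets (finite, as they lie in {1,...,F-1}); represented as seq nat *)
Definition SatF_set (F : nat) (X : seq nat) : Prop :=
  (forall x, x \in X -> ~~ Delta F.+1 x) /\
  exists S, Sat F S /\ (forall x, x \in X -> S x).

Definition SatF_gen (F : nat) (X : seq nat) (S : pred nat) : Prop :=
  SatF_set F X /\
  forall x, S x <-> (forall T, Sat F T -> (forall y, y \in X -> T y) -> T x).

Definition SatF_minimal (F : nat) (X : seq nat) (S : pred nat) : Prop :=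
  SatF_gen F X S /\
  forall Y : seq nat, {subset Y <= X} -> ~ {subset X <= Y} -> ~ SatF_gen F Y S.

(* Sat(F)-rank(S) = n : the (unique) minimal Sat(F)-system of generators
   of S has cardinality n *)
Definition SatF_rank (F : nat) (S : pred nat) (n : nat) : Prop :=
  exists X : seq nat, [/\ uniq X, SatF_minimal F X S & size X = n].

(* Main.v *)
Require Import Defs.
From mathcomp Require Import all_boot.
From mathcomp Require Import zify.
Set Implicit Arguments.

Lemma Tset_sat {F m : nat} : ~~ (m %| F) -> Sat F (Tset m F.+1).
Proof.
move=> ndF; split.
- split; first by rewrite /Tset dvdn0.
  + move=> x y; rewrite /Tset => /orP[hx|hx] /orP[hy|hy].
    * by apply/orP; left; rewrite dvdn_addr // hx.
    * by apply/orP; right; lia.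
    * by apply/orP; right; lia.
    * by apply/orP; right; lia.
  + by exists F.+1 => x hx; rewrite /Tset hx orbT.
- move=> s; rewrite /Tset => /orP[hs|hs] s0; last by apply/orP; right; lia.
  case: (leqP F.+1 s) => hF; first by apply/orP; right; lia.
  apply/orP; left; rewrite dvdn_addr //.
  rewrite /dA big_nat_cond.
  apply: (big_ind (fun y => m %| y)) => //.
  + by move=> a b ha hb; rewrite dvdn_gcd ha hb.
  + move=> i /andP[/andP[_ hi] /orP[//|hi2]]; lia.
- split; first by rewrite /Tset negb_or ndF /= ltnn.
  by move=> x hx; rewrite /Tset hx orbT.
Qed.

Lemma Delta_sat {F : nat} : 0 < F -> Sat F (Delta F.+1).
Proof.
move=> F0; split.
- split => //.
  + move=> x y; rewrite /Delta => /orP[hx|hx] /orP[hy|hy]; apply/orP; lia.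
  + by exists F.+1 => x hx; rewrite /Delta hx orbT.
- move=> s; rewrite /Delta => /orP[/eqP->//|hs] _; apply/orP; right; lia.
- split; first by rewrite /Delta negb_or ltnn andbT -lt0n.
  by move=> x hx; rewrite /Delta hx orbT.
Qed.

Lemma Tset_min {F : nat} (m : nat) {T : pred nat} : Sat F T -> T m ->
  forall x, Tset m F.+1 x -> T x.
Proof.
move=> [[T0 Tadd _] _ [_ Tfr]] Tm x /orP[/dvdnP[k ->]|hx]; last by apply: Tfr.
elim: k => [|k IH]; first by rewrite mul0n.
by rewrite mulSn; apply: Tadd.
Qed.

Theorem corollary48 (F : nat) (S : pred nat) :
  0 < F -> numerical_semigroup S ->
  (Sat F S /\ SatF_rank F S 1) <->
  (exists m : nat, [/\ 2 <= m, m < F, ~~ (m %| F) & S =1 Tset m F.+1]).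
Proof.
move=> F0 _; split.
- move=> [SS [[|x [|y X]] [_ [[[hD [T [TS TX]]] Hgen] _] //]]] _.
  have hx : x \in [:: x] by rewrite inE.
  have Tx := TX x hx.
  have nD := hD x hx; rewrite /Delta negb_or -ltnNge ltnS in nD.
  case/andP: nD => x0 xF.
  have ndF : ~~ (x %| F).
    apply/negP => dF; have [_ _ [TF _]] := TS.
    have := Tset_min x TS Tx F; rewrite /Tset dF => /(_ isT) TFF; by rewrite TFF in TF.
  exists x; split.
  + case: x x0 xF ndF {hx Tx Hgen TX hD} => [|[|x]] //; by rewrite dvd1n.
  + rewrite ltn_neqAle xF andbT; apply/negP => /eqP E; by rewrite E dvdnn in ndF.
  + exact: ndF.
  + move=> z; apply/idP/idP.
    * move=> Sz; apply: (proj1 (Hgen z) Sz); first exact: Tset_sat.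
      by move=> y; rewrite inE => /eqP ->; rewrite /Tset dvdnn.
    * move=> Tz; apply/(Hgen z) => T' T'S T'X.
      exact: (Tset_min x T'S (T'X x hx) z Tz).
- move=> [m [m2 mF ndF ES]].
  have Sm : forall y, y \in [:: m] -> Tset m F.+1 y.
    by move=> y; rewrite inE => /eqP ->; rewrite /Tset dvdnn.
  split.
  + have := Tset_sat (F:=F) ndF; case=> [[h1 h2 h3] h4 [h5 h6]]; split.
    * split; first by rewrite ES.
      - by move=> a b; rewrite !ES; apply: h2.
      - by case: h3 => N HN; exists N => a ha; rewrite ES; apply: HN.
    * move=> s; rewrite ES => hs s0.
      have -> : dA S s = dA (Tset m F.+1) s.
        by rewrite /dA; apply: eq_bigl => i; rewrite ES.
      by rewrite ES; apply: h4.
    * by split; [rewrite ES | move=> a ha; rewrite ES; apply: h6].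
  + exists [:: m]; split => //.
    split.
    * split.
      - split.
        + move=> y; rewrite inE => /eqP ->; rewrite /Delta negb_or -ltnNge ltnS.
          apply/andP; split; [by case: m m2 {Sm mF ndF ES} | exact: ltnW].
        + by exists (Tset m F.+1); split => //; exact: Tset_sat.
      - move=> z; rewrite ES; split.
        + move=> Tz T TS TX; exact: (Tset_min m TS (TX m (mem_head _ _)) z Tz).
        + by move=> H; apply: H => //; exact: Tset_sat.
    * move=> Y sub nsub [_ Hgen].
      have Sm' : S m by rewrite ES /Tset dvdnn.
      have HY : forall y, y \in Y -> Delta F.+1 y.
        move=> y yY; exfalso; apply: nsub => z; rewrite inE => /eqP ->.
        by have := sub y yY; rewrite inE => /eqP <-.
      have := proj1 (Hgen m) Sm' (Delta F.+1) (Delta_sat F0) HY.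
      move=> /orP[/eqP m0|hm]; [by rewrite m0 in m2 | lia].
Qed.
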